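(* Let $h\in\mathbf N$ and let $s$ be a right-infinite word over $\{x,y\}$ such that the frontier $f={}^ts\;y\,x^h\,y\;s$ is admissible. Embed $f$ in the plane and let $t$ be the $SL_2$-tiling with values in $\mathbf N$ extending it. Let $I$ be the lattice point of the embedded path lying between the factor $x^h$ and the following letter $y$ of the middle factor $yx^hy$, and let $J=I+(0,-1)$, $K=I+(0,-2)$. Put $i_n=t(I+n(1,0))$, $j_n=t(J+n(1,-1))$, $k_n=t(K+n(1,-1))$. Then for all $n\in\mathbf N$, $$j_n=(h+1)\,i_n^2\qquad\text{and}\qquad k_n+1=(h+1)\,i_n\,i_{n+1}.$$
   Context: Cartesian coordinates on $\mathbf Z^2$. The transpose ${}^tw$ of a (finite or infinite) word $w$ over $\{x,y\}$ is obtained by reversing $w$ and exchanging $x$ and $y$; the transpose of a right-infinite word is left-infinite. A frontier is a bi-infinite word over $\{x,y\}$, admissible if neither $(x_n)_{n\ge0}$ nor $(x_n)_{n\le0}$ is ultimately constant; it is embedded as lattice points $P_i$ with $P_i-P_{i-1}=(1,0)$ if $x_i=x$ and $(0,1)$ if $x_i=y$. An $SL_2$-tiling extending it is $t:\mathbf Z^2\to\mathbf N$ with $t(a,b+1)t(a+1,b)-t(a,b)t(a+1,b+1)=1$ for all $(a,b)$ and $t(P_i)=1$ for all $i$ (it exists and is unique). *)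

(* Defs.v *)
From Stdlib Require Import ZArith List.
Open Scope Z_scope.

Inductive letter := lx | ly.

Definition swap (c : letter) : letter := match c with lx => ly | ly => lx end.

(* A right-infinite word w_0 w_1 w_2 ... is a function nat -> letter.
   A left-infinite word ... w_2 w_1 w_0 is also represented as nat -> letter,
   index k being the distance from the right end (0 = rightmost letter). *)

(* Transpose of a right-infinite word: reverse and exchange x,y; it is the
   left-infinite word whose k-th letter from the right is swap (s k). *)
Definition transpose_r (s : nat -> letter) : nat -> letter :=
  fun k => swap (s k).

(* Bi-infinite word L m R (left-infinite L, finite m, right-infinite R),
   indexed by Z so that the finite factor m occupies positions 0 .. |m|-1. *)
Definition bi_concat (L : nat -> letter) (m : list letter) (R : nat -> letter)
  : Z -> letter :=
  fun n =>
    if n <? 0 then L (Z.to_nat (- n - 1))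
    else if n <? Z.of_nat (length m) then nth (Z.to_nat n) m lx
    else R (Z.to_nat n - length m)%nat.

Definition mid_factor (h : nat) : list letter := ly :: repeat lx h ++ ly :: nil.

(* The frontier  ^t s  y x^h y  s  (y at position 0, x^h at 1..h, y at h+1). *)
Definition frontier (s : nat -> letter) (h : nat) : Z -> letter :=
  bi_concat (transpose_r s) (mid_factor h) s.

Definition ult_const_right (f : Z -> letter) : Prop :=
  exists N c, forall n, N <= n -> f n = c.
Definition ult_const_left (f : Z -> letter) : Prop :=
  exists N c, forall n, n <= N -> f n = c.

Definition admissible (f : Z -> letter) : Prop :=
  ~ ult_const_right f /\ ~ ult_const_left f.

Definition step (c : letter) : Z * Z :=
  match c with lx => (1, 0) | ly => (0, 1) end.

Definition embeds (f : Z -> letter) (P : Z -> Z * Z) : Prop :=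
  forall i, fst (P i) = fst (P (i - 1)) + fst (step (f i)) /\
            snd (P i) = snd (P (i - 1)) + snd (step (f i)).

Definition SL2_tiling (t : Z -> Z -> nat) : Prop :=
  forall a b,
    Z.of_nat (t a (b + 1)) * Z.of_nat (t (a + 1) b)
    - Z.of_nat (t a b) * Z.of_nat (t (a + 1) (b + 1)) = 1.

Definition extends (t : Z -> Z -> nat) (P : Z -> Z * Z) : Prop :=
  forall i, t (fst (P i)) (snd (P i)) = 1%nat.

(* Main.v *)
Require Import Defs.
From Stdlib Require Import ZArith List Lia Classical.
Open Scope Z_scope.

Definition det (u v : Z*Z) : Z := fst u * snd v - snd u * fst v.
Definition vadd (u v : Z*Z) : Z*Z := (fst u + fst v, snd u + snd v).
Definition vscal (k : Z) (u : Z*Z) : Z*Z := (k * fst u, k * snd u).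
Definition vopp (u : Z*Z) : Z*Z := (- fst u, - snd u).
Definition phi4 (B C A D v : Z*Z) : Z*Z :=
  vadd (vscal (det v B) C) (vopp (vscal (det A v) D)).

Definition TT (t : Z -> Z -> nat) a b : Z := Z.of_nat (t a b).
Definition Yv t b : Z*Z := (TT t 0 b, TT t 1 b).
Definition Xv t a : Z*Z :=
  (- TT t a 1 * TT t 0 0 + TT t a 0 * TT t 0 1,
   - TT t a 1 * TT t 1 0 + TT t a 0 * TT t 1 1).

Lemma uniq (g T : Z -> Z -> Z) :
  (forall a b, T a (b+1) * T (a+1) b - T a b * T (a+1) (b+1) = 1) ->
  (forall a b, g a (b+1) * g (a+1) b - g a b * g (a+1) (b+1) = 1) ->
  (forall a b, T a b <> 0) ->
  (forall a, g a 0 = T a 0) -> (forall a, g a 1 = T a 1) ->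
  (forall b, g 0 b = T 0 b) -> forall a b, g a b = T a b.
Proof.
  intros HT Hg Hnz H0 H1 Hc.
  assert (up : forall b, (forall a, g a b = T a b) -> (forall a, g a (b+1) = T a (b+1)) ->
     forall a, g a (b+2) = T a (b+2)).
  { intros b Hb Hb1. apply Z.peano_ind.
    - apply Hc.
    - intros x IH.
      pose proof (HT x (b+1)) as E1. pose proof (Hg x (b+1)) as E2.
      replace (b+1+1) with (b+2) in E1, E2 by ring.
      rewrite IH, !Hb1 in E2. rewrite <- Z.add_1_r.
      assert (E3: T x (b+1) * (g (x+1) (b+2) - T (x+1) (b+2)) = 0) by nia.
      apply Z.mul_eq_0 in E3. destruct E3 as [E3|E3]; [exfalso; exact (Hnz _ _ E3)| lia].
    - intros x IH.
      pose proof (HT (Z.pred x) (b+1)) as E1. pose proof (Hg (Z.pred x) (b+1)) as E2.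
      replace (b+1+1) with (b+2) in E1, E2 by ring.
      replace (Z.pred x + 1) with x in E1, E2 by lia.
      rewrite IH, !Hb1 in E2.
      assert (E3: T x (b+1) * (g (Z.pred x) (b+2) - T (Z.pred x) (b+2)) = 0) by nia.
      apply Z.mul_eq_0 in E3. destruct E3 as [E3|E3]; [exfalso; exact (Hnz _ _ E3)| lia]. }
  assert (down : forall b, (forall a, g a b = T a b) -> (forall a, g a (b+1) = T a (b+1)) ->
     forall a, g a (b-1) = T a (b-1)).
  { intros b Hb Hb1. apply Z.peano_ind.
    - apply Hc.
    - intros x IH.
      pose proof (HT x (b-1)) as E1. pose proof (Hg x (b-1)) as E2.
      replace (b-1+1) with b in E1, E2 by ring.
      rewrite IH, !Hb in E2. rewrite <- Z.add_1_r.
      assert (E3: T x b * (g (x+1) (b-1) - T (x+1) (b-1)) = 0) by nia.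
      apply Z.mul_eq_0 in E3. destruct E3 as [E3|E3]; [exfalso; exact (Hnz _ _ E3)| lia].
    - intros x IH.
      pose proof (HT (Z.pred x) (b-1)) as E1. pose proof (Hg (Z.pred x) (b-1)) as E2.
      replace (b-1+1) with b in E1, E2 by ring.
      replace (Z.pred x + 1) with x in E1, E2 by lia.
      rewrite IH, !Hb in E2.
      assert (E3: T x b * (g (Z.pred x) (b-1) - T (Z.pred x) (b-1)) = 0) by nia.
      apply Z.mul_eq_0 in E3. destruct E3 as [E3|E3]; [exfalso; exact (Hnz _ _ E3)| lia]. }
  assert (main : forall b, (forall a, g a b = T a b) /\ (forall a, g a (b+1) = T a (b+1))).
  { apply Z.peano_ind.
    - split; [exact H0 | exact H1].
    - intros x [Hx Hx1]. split.
      + rewrite <- Z.add_1_r. exact Hx1.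
      + rewrite <- Z.add_1_r. replace (x+1+1) with (x+2) by ring. apply up; auto.
    - intros x [Hx Hx1]. split.
      + rewrite <- Z.sub_1_r. apply down; auto.
      + replace (Z.pred x + 1) with x by lia. exact Hx. }
  intros a b. apply (proj1 (main b)).
Qed.

Lemma rep t : SL2_tiling t -> forall a b, det (Xv t a) (Yv t b) = TT t a b.
Proof.
  intro Ht.
  assert (HT : forall a b, TT t a (b+1) * TT t (a+1) b - TT t a b * TT t (a+1) (b+1) = 1) by exact Ht.
  pose proof (HT 0 0) as H00. change (0+1) with 1 in H00.
  apply (uniq (fun a b => det (Xv t a) (Yv t b)) (TT t)); auto.
  - intros a b. pose proof (HT a 0) as Ha. pose proof (HT 0 b) as Hb.
    change (0+1) with 1 in Ha, Hb.
    transitivity ((TT t a 1 * TT t (a+1) 0 - TT t a 0 * TT t (a+1) 1) *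
                  (TT t 0 1 * TT t 1 0 - TT t 0 0 * TT t 1 1) *
                  (TT t 0 (b+1) * TT t 1 b - TT t 0 b * TT t 1 (b+1))).
    + unfold det, Xv, Yv; simpl. ring.
    + rewrite Ha, H00, Hb. ring.
  - intros a b Hz. pose proof (HT a (b-1)) as H. replace (b-1+1) with b in H by ring.
    rewrite Hz in H. unfold TT in *.
    pose proof (Nat2Z.is_nonneg (t a (b-1))). pose proof (Nat2Z.is_nonneg (t (a+1) b)). nia.
  - intro a. transitivity (TT t a 0 * (TT t 0 1 * TT t 1 0 - TT t 0 0 * TT t 1 1)).
    + unfold det, Xv, Yv; simpl. ring.
    + rewrite H00. ring.
  - intro a. transitivity (TT t a 1 * (TT t 0 1 * TT t 1 0 - TT t 0 0 * TT t 1 1)).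
    + unfold det, Xv, Yv; simpl. ring.
    + rewrite H00. ring.
  - intro b. transitivity (TT t 0 b * (TT t 0 1 * TT t 1 0 - TT t 0 0 * TT t 1 1)).
    + unfold det, Xv, Yv; simpl. ring.
    + rewrite H00. ring.
Qed.

Lemma vx (u v w : Z*Z) : det u w = 1 -> det v w = 1 -> det u v = 1 -> v = vadd u w.
Proof.
  destruct u as [u1 u2], v as [v1 v2], w as [w1 w2]; unfold det, vadd; simpl; intros A B C.
  set (z1 := v1 - u1 - w1). set (z2 := v2 - u2 - w2).
  assert (P1 : z1 * w2 - z2 * w1 = 0) by (unfold z1, z2; lia).
  assert (P2 : u1 * z2 - u2 * z1 = 0) by (unfold z1, z2; lia).
  assert (E1 : z1 * (u1 * w2 - u2 * w1) = u1 * (z1 * w2 - z2 * w1) + w1 * (u1 * z2 - u2 * z1)) by ring.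
  assert (E2 : z2 * (u1 * w2 - u2 * w1) = u2 * (z1 * w2 - z2 * w1) + w2 * (u1 * z2 - u2 * z1)) by ring.
  rewrite A, P1, P2 in E1, E2. f_equal; unfold z1, z2 in *; lia.
Qed.

Lemma vy (x y y' : Z*Z) : det x y = 1 -> det x y' = 1 -> det y' y = 1 -> y' = vadd y x.
Proof.
  destruct x as [u1 u2], y as [v1 v2], y' as [w1 w2]; unfold det, vadd; simpl; intros A B C.
  set (z1 := w1 - v1 - u1). set (z2 := w2 - v2 - u2).
  assert (P1 : u1 * z2 - u2 * z1 = 0) by (unfold z1, z2; lia).
  assert (P2 : z1 * v2 - z2 * v1 = 0) by (unfold z1, z2; lia).
  assert (E1 : z1 * (u1 * v2 - u2 * v1) = u1 * (z1 * v2 - z2 * v1) + v1 * (u1 * z2 - u2 * z1)) by ring.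
  assert (E2 : z2 * (u1 * v2 - u2 * v1) = u2 * (z1 * v2 - z2 * v1) + v2 * (u1 * z2 - u2 * z1)) by ring.
  rewrite A, P1, P2 in E1, E2. f_equal; unfold z1, z2 in *; lia.
Qed.

Lemma phi_add B C A D u v : phi4 B C A D (vadd u v) = vadd (phi4 B C A D u) (phi4 B C A D v).
Proof. destruct B, C, A, D, u, v; unfold phi4, vadd, vscal, vopp, det; simpl; f_equal; ring. Qed.

Lemma alg_j (h : Z) (X0 Yb u : Z*Z) :
  det u (phi4 (vadd Yb X0) (vadd Yb (vopp (vadd X0 (vscal (-h) Yb)))) X0 (vadd X0 (vscal (-h) Yb)) u)
  = (h+1) * det u Yb ^ 2.
Proof. rewrite Z.pow_2_r. destruct X0, Yb, u; unfold phi4, vadd, vscal, vopp, det; simpl; ring. Qed.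

Lemma alg_k (h : Z) (X0 Yb u w : Z*Z) :
  det u (phi4 (vadd Yb X0) (vadd Yb (vopp (vadd X0 (vscal (-h) Yb)))) X0 (vadd X0 (vscal (-h) Yb)) w)
  = (h+1) * det u Yb * det w Yb - det X0 Yb * det u w.
Proof. destruct X0, Yb, u, w; unfold phi4, vadd, vscal, vopp, det; simpl; ring. Qed.

Lemma len_mid h : length (mid_factor h) = (h + 2)%nat.
Proof. unfold mid_factor. simpl. rewrite length_app, repeat_length. simpl. lia. Qed.

Lemma f_right s h m : frontier s h (Z.of_nat h + 2 + Z.of_nat m) = s m.
Proof.
  unfold frontier, bi_concat. rewrite len_mid.
  destruct (Z.ltb_spec (Z.of_nat h + 2 + Z.of_nat m) 0); [lia|].
  destruct (Z.ltb_spec (Z.of_nat h + 2 + Z.of_nat m) (Z.of_nat (h+2))); [lia|].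
  f_equal. replace (Z.of_nat h + 2 + Z.of_nat m) with (Z.of_nat (h+2+m)) by lia.
  rewrite Nat2Z.id. lia.
Qed.

Lemma f_left s h m : frontier s h (-1 - Z.of_nat m) = swap (s m).
Proof.
  unfold frontier, bi_concat.
  destruct (Z.ltb_spec (-1 - Z.of_nat m) 0); [|lia].
  unfold transpose_r. f_equal. f_equal.
  replace (- (-1 - Z.of_nat m) - 1) with (Z.of_nat m) by lia. apply Nat2Z.id.
Qed.

Lemma f_mid s h z : 0 <= z <= Z.of_nat h + 1 ->
  frontier s h z = if orb (z =? 0) (z =? Z.of_nat h + 1) then ly else lx.
Proof.
  intro Hz. unfold frontier, bi_concat. rewrite len_mid.
  destruct (Z.ltb_spec z 0); [lia|].
  destruct (Z.ltb_spec z (Z.of_nat (h+2))); [|lia].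
  unfold mid_factor.
  destruct (Z.eqb_spec z 0).
  - subst. reflexivity.
  - destruct (Z.to_nat z) as [|k] eqn:E; [lia|]. simpl.
    destruct (Z.eqb_spec z (Z.of_nat h + 1)).
    + assert (k = h) by lia. subst k.
      rewrite app_nth2 by (rewrite repeat_length; lia). rewrite repeat_length, Nat.sub_diag. reflexivity.
    + rewrite app_nth1 by (rewrite repeat_length; lia). apply nth_repeat.
Qed.

Theorem lemma2 (h : nat) (s : nat -> letter)
  (Hadm : admissible (frontier s h))
  (P : Z -> Z * Z) (Hemb : embeds (frontier s h) P)
  (t : Z -> Z -> nat) (Ht : SL2_tiling t) (Hext : extends t P) :
  let I := P (Z.of_nat h) in
  let i_ n := t (fst I + Z.of_nat n) (snd I) in
  let j_ n := t (fst I + Z.of_nat n) (snd I - 1 - Z.of_nat n) in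
  let k_ n := t (fst I + Z.of_nat n) (snd I - 2 - Z.of_nat n) in
  forall n : nat,
    j_ n = ((h + 1) * i_ n ^ 2)%nat /\
    (k_ n + 1 = (h + 1) * i_ n * i_ (S n))%nat.
Proof.
  cbv zeta. intro n.
  assert (Hrep : forall a b, det (Xv t a) (Yv t b) = TT t a b) by (apply rep; exact Ht).
  assert (HT : forall a b, TT t a (b+1) * TT t (a+1) b - TT t a b * TT t (a+1) (b+1) = 1) by exact Ht.
  assert (HdX : forall a, det (Xv t a) (Xv t (a+1)) = 1).
  { intro a. pose proof (HT a 0) as Ha. pose proof (HT 0 0) as H00. change (0+1) with 1 in Ha, H00.
    transitivity ((TT t a 1 * TT t (a+1) 0 - TT t a 0 * TT t (a+1) 1) *
                  (TT t 0 1 * TT t 1 0 - TT t 0 0 * TT t 1 1)).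
    + unfold det, Xv; simpl. ring.
    + rewrite Ha, H00. ring. }
  assert (HdY : forall b, det (Yv t (b+1)) (Yv t b) = 1).
  { intro b. pose proof (HT 0 b) as Hb. change (0+1) with 1 in Hb.
    transitivity (TT t 0 (b+1) * TT t 1 b - TT t 0 b * TT t 1 (b+1)); [|exact Hb].
    unfold det, Yv; simpl. ring. }
  assert (Hpath : forall i, TT t (fst (P i)) (snd (P i)) = 1).
  { intro i. unfold TT. rewrite Hext. reflexivity. }
  assert (Hstep : forall i, P i = (fst (P (i-1)) + fst (step (frontier s h i)),
                                   snd (P (i-1)) + snd (step (frontier s h i)))).
  { intro i. destruct (Hemb i) as [E1 E2]. rewrite <- E1, <- E2. destruct (P i); reflexivity. }
  set (X := Xv t) in *. set (Y := Yv t) in *. clearbody X Y.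
  assert (xs : forall c r, TT t c r = 1 -> TT t (c+1) r = 1 -> X (c+1) = vadd (X c) (Y r)).
  { intros c r H1 H2. apply vx; [rewrite Hrep; auto | rewrite Hrep; auto | apply HdX]. }
  assert (ys : forall c r, TT t c r = 1 -> TT t c (r+1) = 1 -> Y (r+1) = vadd (Y r) (X c)).
  { intros c r H1 H2. apply vy; [rewrite Hrep; auto | rewrite Hrep; auto | apply HdY]. }
  assert (Hon : forall i c r, P i = (c, r) -> TT t c r = 1).
  { intros i c r E. pose proof (Hpath i) as H. rewrite E in H. exact H. }
  destruct (P (Z.of_nat h)) as [a0 b0] eqn:HI. simpl fst; simpl snd.
  assert (Hrow : forall k, (k <= h)%nat -> P (Z.of_nat h - Z.of_nat k) = (a0 - Z.of_nat k, b0) /\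
             X (a0 - Z.of_nat k) = vadd (X a0) (vscal (- Z.of_nat k) (Y b0))).
  { induction k as [|k IH]; intro Hk.
    - simpl. rewrite !Z.sub_0_r, HI. split; [reflexivity|].
      destruct (X a0), (Y b0). unfold vadd, vscal; cbn [fst snd]. f_equal; ring.
    - destruct IH as [IH1 IH2]; [lia|].
      pose proof (Hstep (Z.of_nat h - Z.of_nat k)) as E.
      rewrite f_mid in E by lia.
      destruct (Z.eqb_spec (Z.of_nat h - Z.of_nat k) 0); [lia|].
      destruct (Z.eqb_spec (Z.of_nat h - Z.of_nat k) (Z.of_nat h + 1)); [lia|].
      simpl in E. rewrite IH1 in E.
      assert (E2 : P (Z.of_nat h - Z.of_nat (S k)) = (a0 - Z.of_nat (S k), b0)).
      { rewrite Nat2Z.inj_succ. replace (Z.of_nat h - Z.succ (Z.of_nat k)) with (Z.of_nat h - Z.of_nat k - 1) by lia.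
        destruct (P (Z.of_nat h - Z.of_nat k - 1)) as [p1 p2]. simpl in E. inversion E.
        f_equal; lia. }
      split; [exact E2|].
      pose proof (xs (a0 - Z.of_nat (S k)) b0 (Hon _ _ _ E2)) as Hx.
      replace (a0 - Z.of_nat (S k) + 1) with (a0 - Z.of_nat k) in Hx by lia.
      specialize (Hx (Hon _ _ _ IH1)).
      rewrite IH2 in Hx. rewrite Nat2Z.inj_succ in *. destruct (X a0), (Y b0), (X (a0 - Z.succ (Z.of_nat k))).
      unfold vadd, vscal in *; cbn [fst snd] in *. inversion Hx. f_equal; nia. }
  destruct (Hrow h (le_n h)) as [HP0 HXh].
  rewrite Z.sub_diag in HP0.
  assert (HQ0 : P (Z.of_nat h + 1) = (a0, b0 + 1)).
  { rewrite Hstep. replace (Z.of_nat h + 1 - 1) with (Z.of_nat h) by ring. rewrite HI.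
    rewrite f_mid by lia. rewrite Z.eqb_refl, Bool.orb_true_r. simpl. f_equal; ring. }
  assert (HR0 : P (-1) = (a0 - Z.of_nat h, b0 - 1)).
  { pose proof (Hstep 0) as E. rewrite f_mid in E by lia. simpl in E. rewrite HP0 in E.
    destruct (P (-1)) as [p1 p2]. simpl in E. inversion E. f_equal; lia. }
  assert (EYp : Y (b0+1) = vadd (Y b0) (X a0)) by (apply ys; [exact (Hon _ _ _ HI) | exact (Hon _ _ _ HQ0)]).
  assert (EYb : Y b0 = vadd (Y (b0-1)) (X (a0 - Z.of_nat h))).
  { pose proof (ys (a0 - Z.of_nat h) (b0 - 1) (Hon _ _ _ HR0)) as H.
    replace (b0 - 1 + 1) with b0 in H by ring. apply H. exact (Hon _ _ _ HP0). }
  assert (EYm : Y (b0-1) = vadd (Y b0) (vopp (X (a0 - Z.of_nat h)))).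
  { rewrite EYb. destruct (Y (b0-1)), (X (a0 - Z.of_nat h)). unfold vadd, vopp; cbn [fst snd]. f_equal; ring. }
  set (ph := phi4 (Y (b0+1)) (Y (b0-1)) (X a0) (X (a0 - Z.of_nat h))).
  set (Q := fun m : nat => P (Z.of_nat h + 1 + Z.of_nat m)).
  set (R := fun m : nat => P (-1 - Z.of_nat m)).
  assert (HQs : forall m, Q (S m) = (fst (Q m) + fst (step (s m)), snd (Q m) + snd (step (s m)))).
  { intro m. unfold Q. rewrite Hstep.
    replace (Z.of_nat h + 1 + Z.of_nat (S m) - 1) with (Z.of_nat h + 1 + Z.of_nat m) by lia.
    replace (Z.of_nat h + 1 + Z.of_nat (S m)) with (Z.of_nat h + 2 + Z.of_nat m) by lia.
    rewrite f_right. reflexivity. }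
  assert (HRs : forall m, R m = (fst (R (S m)) + fst (step (swap (s m))), snd (R (S m)) + snd (step (swap (s m))))).
  { intro m. unfold R. rewrite Hstep at 1.
    replace (-1 - Z.of_nat m - 1) with (-1 - Z.of_nat (S m)) by lia.
    rewrite f_left. reflexivity. }
  assert (HonQ : forall m c r, Q m = (c, r) -> TT t c r = 1) by (intros m; apply Hon).
  assert (HonR : forall m c r, R m = (c, r) -> TT t c r = 1) by (intros m; apply Hon).
  assert (Inv : forall m, exists cQ rQ cR rR, Q m = (cQ, rQ) /\ R m = (cR, rR) /\
              Y rR = ph (X cQ) /\ X cR = vopp (ph (Y rQ)) /\ cQ + rR = a0 + b0 - 1).
  { induction m as [|m IH].
    - exists a0, (b0+1), (a0 - Z.of_nat h), (b0 - 1).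
      split; [unfold Q; rewrite Z.add_0_r; exact HQ0|].
      split; [unfold R; rewrite Z.sub_0_r; exact HR0|].
      assert (D1 : det (X a0) (Y (b0+1)) = 1) by (rewrite Hrep; exact (Hon _ _ _ HQ0)).
      split; [|split; [|ring]]; unfold ph, phi4.
      + rewrite D1. destruct (Y (b0-1)), (X a0), (X (a0 - Z.of_nat h)).
        unfold vadd, vscal, vopp, det; cbn [fst snd]; f_equal; ring.
      + rewrite D1. destruct (Y (b0-1)), (Y (b0+1)), (X (a0 - Z.of_nat h)).
        unfold vadd, vscal, vopp, det; cbn [fst snd]; f_equal; ring.
    - destruct IH as (cQ & rQ & cR & rR & EQ & ER & I1 & I2 & I3).
      pose proof (HQs m) as EQs. pose proof (HRs m) as ERs.
      rewrite EQ in EQs. rewrite ER in ERs. simpl in EQs.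
      destruct (R (S m)) as [cR' rR'] eqn:ERS.
      destruct (s m); simpl in EQs, ERs; inversion ERs; subst cR rR.
      +
        exists (cQ + 1), rQ, cR', rR'.
        repeat rewrite Z.add_0_r in EQs, ER, I1, I2, I3; repeat rewrite Z.add_0_r in ER; repeat rewrite Z.add_0_r in I2; repeat rewrite Z.add_0_r in I1; repeat rewrite Z.add_0_r in EQs.
        split; [exact EQs|]. split; [reflexivity|].
        pose proof (xs cQ rQ (HonQ _ _ _ EQ) (HonQ _ _ _ EQs)) as Hx.
        pose proof (ys cR' rR' (HonR _ _ _ ERS)) as Hy. 
        specialize (Hy (HonR _ _ _ ER)).
        split; [|split; [|lia]].
        * rewrite Hx. unfold ph. rewrite phi_add. fold ph.
          rewrite <- I1, Hy.
          assert (E : ph (Y rQ) = vopp (X cR')).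
          { rewrite I2. destruct (ph (Y rQ)). unfold vopp; cbn [fst snd]. f_equal; ring. }
          rewrite E. destruct (Y rR'), (X cR'). unfold vadd, vopp; cbn [fst snd]. f_equal; ring.
        * exact I2.
      +
        exists cQ, (rQ + 1), cR', rR'.
        repeat rewrite Z.add_0_r in EQs, ER, I1, I2, I3; repeat rewrite Z.add_0_r in ER; repeat rewrite Z.add_0_r in I2; repeat rewrite Z.add_0_r in I1; repeat rewrite Z.add_0_r in EQs.
        split; [exact EQs|]. split; [reflexivity|].
        pose proof (ys cQ rQ (HonQ _ _ _ EQ) (HonQ _ _ _ EQs)) as Hy.
        pose proof (xs cR' rR' (HonR _ _ _ ERS)) as Hx. 
        specialize (Hx (HonR _ _ _ ER)).
        split; [|split; [|lia]].
        * exact I1.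
        * rewrite Hy. unfold ph. rewrite phi_add. fold ph.
          rewrite <- I1.
          assert (E : X cR' = vadd (X (cR' + 1)) (vopp (Y rR'))).
          { rewrite Hx. destruct (X cR'), (Y rR'). unfold vadd, vopp; cbn [fst snd]. f_equal; ring. }
          rewrite E, I2. destruct (ph (Y rQ)), (Y rR'). unfold vadd, vopp; cbn [fst snd]. f_equal; ring. }
  assert (Reach : forall n : nat, exists m, fst (Q m) = a0 + Z.of_nat n).
  { intro n'. induction n' as [|n' IH].
    - exists 0%nat. unfold Q. rewrite Z.add_0_r, HQ0. simpl. ring.
    - destruct IH as [m Hm].
      assert (Hex : exists k, (m <= k)%nat /\ s k = lx).
      { apply NNPP. intro Hno. apply (proj1 Hadm).
        exists (Z.of_nat h + 2 + Z.of_nat m), ly. intros z Hz.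
        replace z with (Z.of_nat h + 2 + Z.of_nat (Z.to_nat (z - Z.of_nat h - 2))) by lia.
        rewrite f_right. destruct (s (Z.to_nat (z - Z.of_nat h - 2))) eqn:Es; [|reflexivity].
        exfalso. apply Hno. exists (Z.to_nat (z - Z.of_nat h - 2)). split; [lia|exact Es]. }
      destruct Hex as [k [Hmk Hk]].
      assert (aux : forall d m0, (m0 + d = k)%nat -> fst (Q m0) = a0 + Z.of_nat n' ->
                    exists m1, fst (Q m1) = a0 + Z.of_nat (S n')).
      { induction d as [|d IHd]; intros m0 Hd Hq.
        - assert (m0 = k) by lia. subst m0.
          exists (S k). rewrite HQs, Hk. simpl. lia.
        - destruct (s m0) eqn:Es.
          + exists (S m0). rewrite HQs, Es. simpl. lia.
          + apply (IHd (S m0)); [lia|]. rewrite HQs, Es. simpl. lia. }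
      apply (aux (k - m)%nat m); [lia| exact Hm]. }
  assert (Hrep' : forall a b, Z.of_nat (t a b) = det (X a) (Y b)) by (intros; symmetry; apply Hrep).
  destruct (Reach n) as [m1 Hm1]. destruct (Reach (S n)) as [m2 Hm2].
  destruct (Inv m1) as (cQ1 & rQ1 & cR1 & rR1 & EQ1 & ER1 & J1 & _ & S1).
  destruct (Inv m2) as (cQ2 & rQ2 & cR2 & rR2 & EQ2 & ER2 & J2 & _ & S2).
  rewrite EQ1 in Hm1. rewrite EQ2 in Hm2. cbn [fst snd] in Hm1, Hm2.
  subst cQ1 cQ2.
  assert (rR1 = b0 - 1 - Z.of_nat n) by lia. assert (rR2 = b0 - 2 - Z.of_nat n) by lia. subst rR1 rR2.
  rewrite Nat2Z.inj_succ in J2 |- *.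
  replace (a0 + Z.succ (Z.of_nat n)) with (a0 + Z.of_nat n + 1) in J2 |- * by lia.
  assert (D0 : det (X a0) (Y b0) = 1) by (rewrite Hrep; exact (Hon _ _ _ HI)).
  pose proof (HdX (a0 + Z.of_nat n)) as D1.
  split.
  - apply Nat2Z.inj. rewrite Nat.pow_2_r, Nat2Z.inj_mul, Nat2Z.inj_mul, Nat2Z.inj_add.
    rewrite !Hrep', J1. unfold ph. rewrite EYm, HXh, EYp, alg_j. change (Z.of_nat 1) with 1. ring.
  - apply Nat2Z.inj. rewrite !Nat2Z.inj_mul, !Nat2Z.inj_add.
    rewrite !Hrep', J2. unfold ph. rewrite EYm, HXh, EYp, alg_k, D0, D1. change (Z.of_nat 1) with 1. ring.
Qed.
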